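(* Let $I\subset\mathbb{R}$ be an open interval, let $\bm{a}:I\to\mathbb{R}^2_1$ be a frontal and $r:I\to\mathbb{R}^+$ a smooth positive function, and suppose the pseudo-circle family $C_{(\bm{a}(t),\pm r(t))}$ creates an envelope. Let $E_2$ denote the union of the images of all envelopes created by this family. Then: (1) $\mathcal{D}=E_2$ if $\bm{a}$ is regular at every $t\in I$; (2) $\mathcal{D}=E_2\cup C_{(\bm{a}(t_1),\pm r(t_1))}\cup\cdots\cup C_{(\bm{a}(t_k),\pm r(t_k))}$ if $t_1,\ldots,t_k$ are the singular points of $\bm{a}$.
   Context: All objects are $C^\infty$. The Minkowski plane $\mathbb{R}^2_1$ is $\mathbb{R}^2$ with $\langle\bm{x},\bm{y}\rangle=-x_1y_1+x_2y_2$ and $\|\bm{x}\|^2:=\langle\bm{x},\bm{x}\rangle$; $S^1_1=\{\bm{x}:\langle\bm{x},\bm{x}\rangle=1\}$, $H^1=\{\bm{x}:\langle\bm{x},\bm{x}\rangle=-1\}$. A smooth $\bm{a}:I\to\mathbb{R}^2_1$ is a frontal if there is a smooth $\bm{\nu}:I\to H^1$ or $S^1_1$ with $\langle\frac{d\bm{a}}{dt}(t),\bm{\nu}(t)\rangle=0$ for all $t$; $t$ is a singular point of $\bm{a}$ if $\frac{d\bm{a}}{dt}(t)=0$, and regular otherwise. $C_{(\bm{a}(t),\pm r(t))}=\{\bm{x}:\langle\bm{x}-\bm{a}(t),\bm{x}-\bm{a}(t)\rangle=\pm r(t)^2\}$ (same sign throughout). An envelope of this family is a smooth $f:I\to\mathbb{R}^2_1$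 with $f(t)\in C_{(\bm{a}(t),\pm r(t))}$ and $\langle\frac{df}{dt}(t),f(t)-\bm{a}(t)\rangle=0$ for all $t$. With $F(x,y,t)=\|(x,y)-\bm{a}(t)\|^2\mp r(t)^2$, the $\mathcal{D}$ envelope is $\mathcal{D}=\{(x,y)\in\mathbb{R}^2_1:\exists t\in I,\ F(x,y,t)=\frac{\partial F}{\partial t}(x,y,t)=0\}$. *)

(* Defs.v *)
From Stdlib Require Import Reals List.
From Coquelicot Require Import Coquelicot.
Open Scope R_scope.

Definition inI (lo hi : Rbar) (t : R) : Prop := Rbar_lt lo t /\ Rbar_lt t hi.

Definition smooth_on (lo hi : Rbar) (f : R -> R) : Prop :=
  forall (n : nat) (t : R), inI lo hi t -> ex_derive_n f n t.

Definition mink (x1 x2 y1 y2 : R) : R := - x1 * y1 + x2 * y2.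

(* a = (a1,a2) : I -> R^2_1 is a frontal: there is a smooth
   nu : I -> H^1 or nu : I -> S^1_1 with <a'(t), nu(t)> = 0. *)
Definition frontal (lo hi : Rbar) (a1 a2 : R -> R) : Prop :=
  smooth_on lo hi a1 /\ smooth_on lo hi a2 /\
  exists nu1 nu2 : R -> R,
    smooth_on lo hi nu1 /\ smooth_on lo hi nu2 /\
    ((forall t, inI lo hi t -> mink (nu1 t) (nu2 t) (nu1 t) (nu2 t) = -1) \/
     (forall t, inI lo hi t -> mink (nu1 t) (nu2 t) (nu1 t) (nu2 t) = 1)) /\
    (forall t, inI lo hi t -> mink (Derive a1 t) (Derive a2 t) (nu1 t) (nu2 t) = 0).

Definition singular_pt (a1 a2 : R -> R) (t : R) : Prop :=
  Derive a1 t = 0 /\ Derive a2 t = 0.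

(* Pseudo-circle C_(a(t), eps r(t)) with eps = +1 or -1 (fixed sign):
   {x | <x - a(t), x - a(t)> = eps r(t)^2}. *)
Definition pcircle (eps : R) (a1 a2 r : R -> R) (t : R) (p : R * R) : Prop :=
  mink (fst p - a1 t) (snd p - a2 t) (fst p - a1 t) (snd p - a2 t) = eps * (r t)^2.

Definition envelope (lo hi : Rbar) (eps : R) (a1 a2 r f1 f2 : R -> R) : Prop :=
  smooth_on lo hi f1 /\ smooth_on lo hi f2 /\
  (forall t, inI lo hi t -> pcircle eps a1 a2 r t (f1 t, f2 t)) /\
  (forall t, inI lo hi t ->
     mink (Derive f1 t) (Derive f2 t) (f1 t - a1 t) (f2 t - a2 t) = 0).

Definition E2 (lo hi : Rbar) (eps : R) (a1 a2 r : R -> R) (p : R * R) : Prop :=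
  exists f1 f2 : R -> R, envelope lo hi eps a1 a2 r f1 f2 /\
    exists t, inI lo hi t /\ p = (f1 t, f2 t).

Definition Ffam (eps : R) (a1 a2 r : R -> R) (x y t : R) : R :=
  mink (x - a1 t) (y - a2 t) (x - a1 t) (y - a2 t) - eps * (r t)^2.

Definition Denv (lo hi : Rbar) (eps : R) (a1 a2 r : R -> R) (p : R * R) : Prop :=
  exists t, inI lo hi t /\
    Ffam eps a1 a2 r (fst p) (snd p) t = 0 /\
    Derive (fun s => Ffam eps a1 a2 r (fst p) (snd p) s) t = 0.

(* Main.v *)
Require Import Defs.
From Stdlib Require Import Reals List Lra Lia Psatz Classical.
From Coquelicot Require Import Coquelicot.
Open Scope R_scope.

Section S.
Variables (lo hi : Rbar).

Lemma locI t : inI lo hi t -> locally t (fun s => inI lo hi s).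
Proof. intros [H1 H2]. apply (locally_interval _ t lo hi H1 H2). intros; split; auto. Qed.

Lemma DnS (h : R -> R) m x : Derive_n h (S m) x = Derive_n (Derive h) m x.
Proof.
  revert x; induction m; intros x; simpl. reflexivity.
  apply Derive_ext. intros; rewrite <- IHm; reflexivity.
Qed.

Lemma exS (h : R -> R) k t : ex_derive h t -> ex_derive_n (Derive h) k t -> ex_derive_n h (S k) t.
Proof.
  destruct k; simpl; intros H1 H2. exact H1.
  eapply ex_derive_ext; [|exact H2]. intros; simpl. symmetry; apply (DnS h k).
Qed.

Lemma smooth_D f : smooth_on lo hi f -> smooth_on lo hi (Derive f).
Proof.
  intros H n t Ht. destruct n. exact I.
  specialize (H (S (S n)) t Ht). simpl in H |- *.
  eapply ex_derive_ext; [|exact H]. intros. apply (DnS f n).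
Qed.

Lemma smooth_ex f t : smooth_on lo hi f -> inI lo hi t -> ex_derive f t.
Proof. intros H Ht. exact (H 1%nat t Ht). Qed.

Definition sm n f := forall t, inI lo hi t -> forall k, (k <= n)%nat -> ex_derive_n f k t.

Lemma sm_plus n f g : sm n f -> sm n g -> sm n (fun x => f x + g x).
Proof.
  intros Hf Hg t Ht k Hk. apply ex_derive_n_plus.
  - eapply filter_imp; [|apply (locI t Ht)]. intros s Hs j Hj. apply Hf; auto; lia.
  - eapply filter_imp; [|apply (locI t Ht)]. intros s Hs j Hj. apply Hg; auto; lia.
Qed.

Lemma sm_ext n f g : (forall t, inI lo hi t -> f t = g t) -> sm n f -> sm n g.
Proof.
  intros He Hf t Ht k Hk. eapply ex_derive_n_ext_loc; [|apply (Hf t Ht k Hk)].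
  eapply filter_imp; [|apply (locI t Ht)]. intros; auto.
Qed.

Lemma smooth_mult_n n : forall f g, smooth_on lo hi f -> smooth_on lo hi g ->
  sm n (fun x => f x * g x).
Proof.
  induction n; intros f g Hf Hg t Ht k Hk.
  - replace k with 0%nat by lia. exact I.
  - destruct k. exact I.
    apply exS.
    + apply ex_derive_mult; eapply smooth_ex; eauto.
    + assert (Hs : sm n (fun x => Derive f x * g x + f x * Derive g x)).
      { apply sm_plus. apply IHn; auto. apply smooth_D; auto.
        apply IHn; auto. apply smooth_D; auto. }
      assert (Hs2 : sm n (Derive (fun x => f x * g x))).
      { eapply sm_ext; [|exact Hs]. intros s Hs'. rewrite Derive_mult; auto;
        eapply smooth_ex; eauto. }
      apply Hs2; auto; lia.
Qed.

Lemma smooth_mult f g : smooth_on lo hi f -> smooth_on lo hi g ->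
  smooth_on lo hi (fun x => f x * g x).
Proof. intros Hf Hg n t Ht. apply (smooth_mult_n n f g Hf Hg t Ht n). lia. Qed.

Lemma smooth_plus f g : smooth_on lo hi f -> smooth_on lo hi g ->
  smooth_on lo hi (fun x => f x + g x).
Proof.
  intros Hf Hg n t Ht. apply ex_derive_n_plus.
  - eapply filter_imp; [|apply (locI t Ht)]. intros s Hs j Hj. apply Hf; auto.
  - eapply filter_imp; [|apply (locI t Ht)]. intros s Hs j Hj. apply Hg; auto.
Qed.

Lemma smooth_const c : smooth_on lo hi (fun _ => c).
Proof. intros n t _. apply ex_derive_n_const. Qed.

Lemma smooth_opp f : smooth_on lo hi f -> smooth_on lo hi (fun x => - f x).
Proof. intros H n t Ht. apply ex_derive_n_opp; auto. Qed.

Lemma smooth_ext f g : (forall x, f x = g x) -> smooth_on lo hi f -> smooth_on lo hi g.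
Proof. intros He H n t Ht. eapply ex_derive_n_ext; [exact He|]. auto. Qed.

End S.
Ltac eta_fix := repeat match goal with
  | |- context [Derive (fun x : R => ?f x) ?t] => change (Derive (fun x : R => f x) t) with (Derive f t)
  end.

Lemma deriv_circle lo hi eps (a1 a2 r h1 h2 : R -> R) t :
  inI lo hi t -> ex_derive a1 t -> ex_derive a2 t -> ex_derive r t ->
  ex_derive h1 t -> ex_derive h2 t ->
  (forall s, inI lo hi s -> pcircle eps a1 a2 r s (h1 s, h2 s)) ->
  -(h1 t - a1 t)*(Derive h1 t - Derive a1 t) + (h2 t - a2 t)*(Derive h2 t - Derive a2 t)
  = eps * r t * Derive r t.
Proof.
  intros Ht d1 d2 dr e1 e2 Hc.
  assert (E : Derive (fun s => -(h1 s - a1 s)*(h1 s - a1 s) + (h2 s - a2 s)*(h2 s - a2 s)) t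
            = Derive (fun s => eps * (r s)^2) t).
  { apply Derive_ext_loc. eapply filter_imp; [|apply (locI lo hi t Ht)].
    intros s Hs. specialize (Hc s Hs). unfold pcircle, mink in Hc; simpl in Hc. lra. }
  assert (L : Derive (fun s => -(h1 s - a1 s)*(h1 s - a1 s) + (h2 s - a2 s)*(h2 s - a2 s)) t =
     (2 * (-(h1 t - a1 t)*(Derive h1 t - Derive a1 t) + (h2 t - a2 t)*(Derive h2 t - Derive a2 t)))).
  { apply is_derive_unique; auto_derive. repeat split; auto. eta_fix. ring. }
  assert (Rr : Derive (fun s => eps * (r s)^2) t = (2 * (eps * r t * Derive r t))).
  { apply is_derive_unique; auto_derive. auto. eta_fix. ring. }
  rewrite L, Rr in E. lra.
Qed.

Lemma deriv_F eps (a1 a2 r : R -> R) x y t :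
  ex_derive a1 t -> ex_derive a2 t -> ex_derive r t ->
  Derive (fun s => Ffam eps a1 a2 r x y s) t =
  2 * ((x - a1 t) * Derive a1 t - (y - a2 t) * Derive a2 t - eps * r t * Derive r t).
Proof.
  intros d1 d2 dr. apply is_derive_unique. unfold Ffam, mink.
  auto_derive. repeat split; auto. eta_fix. ring.
Qed.
Theorem theorem5 (lo hi : Rbar) (eps : R) (a1 a2 r : R -> R) :
  Rbar_lt lo hi ->
  (eps = 1 \/ eps = -1) ->
  frontal lo hi a1 a2 ->
  smooth_on lo hi r ->
  (forall t, inI lo hi t -> 0 < r t) ->
  (exists f1 f2 : R -> R, envelope lo hi eps a1 a2 r f1 f2) ->
  ((forall t, inI lo hi t -> ~ singular_pt a1 a2 t) ->
     forall p, Denv lo hi eps a1 a2 r p <-> E2 lo hi eps a1 a2 r p) /\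
  (forall ts : list R,
     (forall t, (inI lo hi t /\ singular_pt a1 a2 t) <-> In t ts) ->
     forall p, Denv lo hi eps a1 a2 r p <->
       (E2 lo hi eps a1 a2 r p \/ exists t, In t ts /\ pcircle eps a1 a2 r t p)).
Proof.
  intros Hlohi Heps Hfr Hr Hrpos [f1 [f2 Hf]].
  destruct Hfr as [Ha1 [Ha2 [nu1 [nu2 [Hn1 [Hn2 [Hnn Hort]]]]]]].
  assert (Hsg : exists sg, sg * sg = 1 /\ forall t, inI lo hi t ->
            mink (nu1 t) (nu2 t) (nu1 t) (nu2 t) = sg).
  { destruct Hnn as [H|H]; [exists (-1)|exists 1]; split; auto; lra. }
  destruct Hsg as [sg [Hsg Hnu]].
  assert (dA : forall t, inI lo hi t -> ex_derive a1 t /\ ex_derive a2 t /\ ex_derive r t).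
  { intros t Ht; repeat split; eapply smooth_ex; eauto. }
  assert (envD : forall h1 h2, envelope lo hi eps a1 a2 r h1 h2 -> forall t, inI lo hi t ->
     (h1 t - a1 t) * Derive a1 t - (h2 t - a2 t) * Derive a2 t = eps * r t * Derive r t).
  { intros h1 h2 [Hh1 [Hh2 [Hhc Hhe]]] t Ht.
    destruct (dA t Ht) as [d1 [d2 dr]].
    pose proof (deriv_circle lo hi eps a1 a2 r h1 h2 t Ht d1 d2 dr
      (smooth_ex _ _ _ _ Hh1 Ht) (smooth_ex _ _ _ _ Hh2 Ht) Hhc) as E.
    specialize (Hhe t Ht). unfold mink in Hhe. lra. }
  pose proof (envD f1 f2 Hf) as fD.
  assert (HA : forall p, E2 lo hi eps a1 a2 r p -> Denv lo hi eps a1 a2 r p).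
  { intros p [h1 [h2 [Hh [t [Ht ->]]]]]. exists t. split; [exact Ht|].
    destruct (dA t Ht) as [d1 [d2 dr]]. simpl. split.
    - destruct Hh as [_ [_ [Hc _]]]. specialize (Hc t Ht). unfold pcircle in Hc; simpl in Hc.
      unfold Ffam. lra.
    - rewrite deriv_F by auto. rewrite (envD h1 h2 Hh t Ht). ring. }
  assert (sing_r : forall t, inI lo hi t -> singular_pt a1 a2 t -> Derive r t = 0).
  { intros t Ht [s1 s2]. specialize (fD t Ht). rewrite s1, s2 in fD.
    specialize (Hrpos t Ht).
    assert (eps * r t <> 0). { apply Rmult_integral_contrapositive; split; lra. }
    apply (Rmult_eq_reg_l (eps * r t)); auto. lra. }
  assert (HC : forall t p, inI lo hi t -> singular_pt a1 a2 t -> pcircle eps a1 a2 r t p ->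
             Denv lo hi eps a1 a2 r p).
  { intros t p Ht Hs Hc. exists t. split; [exact Ht|].
    destruct (dA t Ht) as [d1 [d2 dr]]. split.
    - unfold pcircle in Hc. unfold Ffam. lra.
    - rewrite deriv_F by auto. rewrite (sing_r t Ht Hs). destruct Hs as [-> ->]. ring. }
  (* reflected envelope *)
  set (K := fun s => -(f1 s - a1 s) * nu1 s + (f2 s - a2 s) * nu2 s).
  set (g1 := fun s => f1 s + (-(2*sg)) * (K s * nu1 s)).
  set (g2 := fun s => f2 s + (-(2*sg)) * (K s * nu2 s)).
  destruct Hf as [Hf1 [Hf2 [Hfc Hfe]]].
  assert (sK : smooth_on lo hi K).
  { unfold K. apply smooth_plus.
    - eapply smooth_ext with (f := fun s => (fun s => -(f1 s + - a1 s)) s * nu1 s).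
      { intros; ring. }
      apply smooth_mult; auto. apply smooth_opp, smooth_plus; auto. apply smooth_opp; auto.
    - eapply smooth_ext with (f := fun s => (fun s => (f2 s + - a2 s)) s * nu2 s).
      { intros; ring. }
      apply smooth_mult; auto. apply smooth_plus; auto. apply smooth_opp; auto. }
  assert (sg1 : smooth_on lo hi g1).
  { unfold g1. apply smooth_plus; auto. apply smooth_mult. apply smooth_const.
    apply smooth_mult; auto. }
  assert (sg2 : smooth_on lo hi g2).
  { unfold g2. apply smooth_plus; auto. apply smooth_mult. apply smooth_const.
    apply smooth_mult; auto. }
  assert (gc : forall t, inI lo hi t -> pcircle eps a1 a2 r t (g1 t, g2 t)).
  { intros t Ht. specialize (Hfc t Ht). specialize (Hnu t Ht).
    unfold pcircle, mink in *; simpl in *. unfold g1, g2.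
    rewrite <- Hfc.
    assert (E : forall w1 w2 n1 n2 k s,
      -(w1 + - (2*s) * (k * n1)) * (w1 + - (2*s) * (k * n1)) +
      (w2 + - (2*s) * (k * n2)) * (w2 + - (2*s) * (k * n2))
      = -w1*w1 + w2*w2 - 4*s*k*(-w1*n1 + w2*n2) + 4*s*s*k*k*(-n1*n1+n2*n2)) by (intros; ring).
    replace (f1 t + - (2 * sg) * (K t * nu1 t) - a1 t) with
      ((f1 t - a1 t) + - (2 * sg) * (K t * nu1 t)) by ring.
    replace (f2 t + - (2 * sg) * (K t * nu2 t) - a2 t) with
      ((f2 t - a2 t) + - (2 * sg) * (K t * nu2 t)) by ring.
    rewrite E, Hnu. unfold K.
    replace (4 * sg * sg * (- (f1 t - a1 t) * nu1 t + (f2 t - a2 t) * nu2 t) *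
       (- (f1 t - a1 t) * nu1 t + (f2 t - a2 t) * nu2 t) * sg) with
       (4 * (sg * sg) * sg * ((- (f1 t - a1 t) * nu1 t + (f2 t - a2 t) * nu2 t) *
       (- (f1 t - a1 t) * nu1 t + (f2 t - a2 t) * nu2 t))) by ring.
    rewrite Hsg. ring. }
  assert (genv : envelope lo hi eps a1 a2 r g1 g2).
  { split; [auto|split; [auto|split; [exact gc|]]].
    intros t Ht. destruct (dA t Ht) as [d1 [d2 dr]].
    pose proof (deriv_circle lo hi eps a1 a2 r g1 g2 t Ht d1 d2 dr
      (smooth_ex _ _ _ _ sg1 Ht) (smooth_ex _ _ _ _ sg2 Ht) gc) as E.
    specialize (fD t Ht). specialize (Hort t Ht).
    unfold mink in *.
    assert (X : (g1 t - a1 t) * Derive a1 t - (g2 t - a2 t) * Derive a2 t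
                = eps * r t * Derive r t).
    { rewrite <- fD. unfold g1, g2.
      replace ((f1 t + - (2 * sg) * (K t * nu1 t) - a1 t) * Derive a1 t -
        (f2 t + - (2 * sg) * (K t * nu2 t) - a2 t) * Derive a2 t) with
        ((f1 t - a1 t) * Derive a1 t - (f2 t - a2 t) * Derive a2 t
         + 2 * sg * K t * (- Derive a1 t * nu1 t + Derive a2 t * nu2 t)) by ring.
      rewrite Hort. ring. }
    lra. }
  assert (HB : forall t p, inI lo hi t -> ~ singular_pt a1 a2 t ->
     Ffam eps a1 a2 r (fst p) (snd p) t = 0 ->
     Derive (fun s => Ffam eps a1 a2 r (fst p) (snd p) s) t = 0 ->
     E2 lo hi eps a1 a2 r p).
  { intros t [x y] Ht Hns H1 H2. simpl in H1, H2. pose proof Hfc as HfcA.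
    destruct (dA t Ht) as [d1 [d2 dr]].
    rewrite deriv_F in H2 by auto.
    specialize (fD t Ht). specialize (Hort t Ht). specialize (Hnu t Ht).
    specialize (Hfc t Ht). unfold Ffam, pcircle, mink in *; simpl in *.
    set (A1 := Derive a1 t) in *. set (A2 := Derive a2 t) in *.
    set (n1 := nu1 t) in *. set (n2 := nu2 t) in *.
    set (w1 := f1 t - a1 t) in *. set (w2 := f2 t - a2 t) in *.
    set (u1 := (x - a1 t) - w1). set (u2 := (y - a2 t) - w2).
    assert (Hu : - A1 * u1 + A2 * u2 = 0) by (unfold u1, u2; lra).
    assert (Hdet : u1 * n2 - u2 * n1 = 0).
    { assert (P1 : A1 * (u1 * n2 - u2 * n1) = 0).
      { replace (A1 * (u1 * n2 - u2 * n1)) with (- n2 * (- A1 * u1 + A2 * u2) + u2 * (- A1 * n1 + A2 * n2)) by ring.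
        rewrite Hu, Hort. ring. }
      assert (P2 : A2 * (u1 * n2 - u2 * n1) = 0).
      { replace (A2 * (u1 * n2 - u2 * n1)) with (u1 * (- A1 * n1 + A2 * n2) - n1 * (- A1 * u1 + A2 * u2)) by ring.
        rewrite Hu, Hort. ring. }
      destruct (Req_dec A1 0) as [Z1|Z1].
      - destruct (Req_dec A2 0) as [Z2|Z2].
        + exfalso; apply Hns; split; auto.
        + apply (Rmult_eq_reg_l A2); auto; lra.
      - apply (Rmult_eq_reg_l A1); auto; lra. }
    set (lam := sg * (- u1 * n1 + u2 * n2)).
    assert (L1 : u1 = lam * n1).
    { unfold lam. transitivity (sg * (u1 * (- n1 * n1 + n2 * n2))).
      rewrite Hnu. transitivity (sg * sg * u1); [rewrite Hsg; ring| ring].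
      assert (E : sg * (- u1 * n1 + u2 * n2) * n1 = sg * (u1 * (- n1 * n1 + n2 * n2)) - sg * n2 * (u1 * n2 - u2 * n1)) by ring.
      rewrite E, Hdet. ring. }
    assert (L2 : u2 = lam * n2).
    { unfold lam. transitivity (sg * (u2 * (- n1 * n1 + n2 * n2))).
      rewrite Hnu. transitivity (sg * sg * u2); [rewrite Hsg; ring| ring].
      assert (E : sg * (- u1 * n1 + u2 * n2) * n2 = sg * (u2 * (- n1 * n1 + n2 * n2)) - sg * n1 * (u1 * n2 - u2 * n1)) by ring.
      rewrite E, Hdet. ring. }
    assert (Q : lam * (2 * (- w1 * n1 + w2 * n2) + lam * sg) = 0).
    { assert (Ex : x - a1 t = w1 + lam * n1) by (unfold u1 in L1; lra).
      assert (Ey : y - a2 t = w2 + lam * n2) by (unfold u2 in L2; lra).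
      rewrite Ex, Ey in H1. rewrite <- Hnu. nra. }
    destruct (Rmult_integral _ _ Q) as [Z|Z].
    - exists f1, f2. split. { exact (conj Hf1 (conj Hf2 (conj HfcA Hfe))). }
      exists t. split; auto. f_equal.
      + assert (u1 = 0) by (rewrite L1, Z; ring). unfold u1, w1 in *. lra.
      + assert (u2 = 0) by (rewrite L2, Z; ring). unfold u2, w2 in *. lra.
    - assert (Zl : lam = -(2 * sg) * K t).
      { unfold K. fold n1 n2 w1 w2. transitivity (lam * (sg * sg)); [rewrite Hsg; ring|].
        nra. }
      exists g1, g2. split; auto. exists t. split; auto. unfold g1, g2. f_equal.
      + assert (x - a1 t = w1 + lam * n1) by (unfold u1 in L1; lra).
        rewrite Zl in H. unfold w1, n1 in H. lra.
      + assert (y - a2 t = w2 + lam * n2) by (unfold u2 in L2; lra).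
        rewrite Zl in H. unfold w2, n2 in H. lra. }
  split.
  - intros Hreg p. split; [|apply HA].
    intros [t [Ht [H1 H2]]]. eapply HB; eauto.
  - intros ts Hts p. split.
    + intros [t [Ht [H1 H2]]].
      destruct (classic (singular_pt a1 a2 t)) as [Hs|Hs].
      * right. exists t. split. apply Hts; auto.
        destruct p as [x y]. unfold Ffam in H1. unfold pcircle. simpl in *. lra.
      * left. eapply HB; eauto.
    + intros [H|[t [Hin Hc]]]. apply HA; auto.
      apply Hts in Hin. destruct Hin. eapply HC; eauto.
Qed.
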